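(* Let $q\in(0,1)$ and fix a real number $\sigma$. There is a constant $C>0$ depending only on $\sigma$ with the following property: for every positive integer $N$ and every $t\in\mathbb{C}\setminus\{a+2\pi i b/\log q : a,b\in\mathbb{Z},\ a\le 0\}$, for all real $v$ with $|v|$ sufficiently large, writing $s=\sigma+iv$, $$\left|\sum_{r=0}^{\infty}\binom{r+s-1}{r}\frac{q^{N(t+r)}}{1-q^{t+r}}\right|\le C\left[\frac{q^{N\Re(t)}}{|1-q^{t}|}+\frac{q^{N\Re(t)}\,e^{|\sigma+iv|}}{\inf_{r\in\mathbb{Z}_{\ge1}}|1-q^{t+r}|}\exp\left(\frac{\pi}{2}|v|\right)\left\{\frac{q^{N}}{1-q^{N}}+|v|^{-1/2}q^{N|v|}\left(1+\frac{1}{-N\log q}\right)\right\}\right].$$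
   Context: For $q\in(0,1)$, $q^w=e^{w\log q}$ for complex $w$. For complex $s$ and integer $r\ge0$, $\binom{r+s-1}{r}=\frac{s(s+1)\cdots(s+r-1)}{r!}=\frac{\Gamma(r+s)}{r!\,\Gamma(s)}$. The series on the left is the one appearing in the meromorphic continuation of $\zeta_q(s,t)=\sum_{m\ge1}q^{mt}\left(\frac{1-q^m}{1-q}\right)^{-s}$. *)

(* Defs.v *)
From Stdlib Require Import Reals.
From Coquelicot Require Export Coquelicot.
Open Scope R_scope.

Definition Cexp (z : C) : C :=
  (exp (fst z) * cos (snd z), exp (fst z) * sin (snd z)).

Definition qpow (q : R) (w : C) : C := Cexp (w * RtoC (ln q)).

Fixpoint rising (s : C) (r : nat) : C :=
  match r with
  | O => 1%C
  | S r' => (rising s r' * (s + RtoC (INR r')))%C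
  end.

(* generalized binomial coefficient binom(r+s-1, r) = s(s+1)...(s+r-1)/r! *)
Definition gbinom (s : C) (r : nat) : C :=
  (rising s r / RtoC (INR (Factorial.fact r)))%C.

Definition zeta_term (q : R) (s t : C) (N r : nat) : C :=
  (gbinom s r * qpow q (RtoC (INR N) * (t + RtoC (INR r)))
     / (1 - qpow q (t + RtoC (INR r))))%C.

Definition inf_dist (q : R) (t : C) : R :=
  real (Glb_Rbar (fun x => exists r : nat, (1 <= r)%nat /\
                     x = Cmod (1 - qpow q (t + RtoC (INR r)))%C)).

(* Main.v *)
Require Import Defs.
From Stdlib Require Import Reals Lra Lia Factorial.
From Coquelicot Require Import Coquelicot.
Open Scope R_scope.

Lemma series_norm_le (a : nat -> C) (b : nat -> R) (L : C) :
  is_series a L -> ex_series b -> (forall n, Cmod (a n) <= b n) ->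
  Cmod L <= Series b.
Proof.
  intros HL Hb Hab.
  assert (H1 : is_lim_seq (fun n => Cmod (sum_n a n)) (Cmod L)).
  { assert (Hn := @filterlim_norm C_AbsRing C_NormedModule L).
    exact (filterlim_comp _ _ _ _ _ _ _ _ HL Hn). }
  assert (H2 : is_lim_seq (sum_n b) (Series b)).
  { apply Series_correct in Hb. exact Hb. }
  assert (H0 : forall n, Cmod (sum_n a n) <= sum_n b n).
  { intros n. unfold sum_n. eapply Rle_trans.
    apply (@norm_sum_n_m C_AbsRing C_NormedModule).
    apply sum_n_m_le. intros k. apply Hab. }
  assert (H3 := is_lim_seq_le _ _ _ _ H0 H1 H2).
  simpl in H3. apply H3.
Qed.

Lemma fst_mulR (w : C) (l : R) : fst (w * RtoC l)%C = fst w * l.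
Proof. destruct w; simpl; ring. Qed.
Lemma snd_mulR (w : C) (l : R) : snd (w * RtoC l)%C = snd w * l.
Proof. destruct w; simpl; ring. Qed.

Lemma qpow_mod (q : R) (w : C) : Cmod (qpow q w) = exp (fst w * ln q).
Proof.
  unfold qpow, Cexp, Cmod. rewrite fst_mulR, snd_mulR. simpl.
  set (e := exp (fst w * ln q)). set (th := snd w * ln q).
  replace ((e * cos th * ((e * cos th) * 1) + e * sin th * ((e * sin th) * 1)))
    with (e * e * (sin th * sin th + cos th * cos th)) by ring.
  rewrite <- (Rsqr_def (sin th)), <- (Rsqr_def (cos th)), sin2_cos2, Rmult_1_r.
  apply sqrt_square. unfold e; left; apply exp_pos.
Qed.

Lemma qpow_eq1 (q : R) (w : C) : 0 < q -> q < 1 -> qpow q w = 1%C ->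
  fst w = 0 /\ exists k : Z, snd w = 2 * PI * IZR k / ln q.
Proof.
  intros hq0 hq1 H.
  assert (hl : ln q < 0) by (rewrite <- ln_1; apply ln_increasing; lra).
  unfold qpow, Cexp in H. rewrite fst_mulR, snd_mulR in H.
  injection H. clear H.
  set (a := fst w * ln q). set (th := snd w * ln q). intros Hs Hc.
  assert (he := exp_pos a).
  assert (hs : sin th = 0).
  { apply Rmult_integral in Hs. destruct Hs; [lra|auto]. }
  assert (hc2 := sin2_cos2 th). rewrite hs in hc2. unfold Rsqr in hc2.
  assert (hc : cos th = 1).
  { assert (cos th > 0).
    { destruct (Rlt_le_dec 0 (cos th)); auto. nra. }
    nra. }
  rewrite hc, Rmult_1_r in Hc.
  assert (ha : a = 0).
  { rewrite <- (ln_exp a), Hc. apply ln_1. }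
  split.
  - unfold a in ha. apply Rmult_integral in ha. destruct ha; [auto|lra].
  - assert (H2 : sin (th / 2) = 0).
    { assert (E := cos_2a_sin (th / 2)).
      replace (2 * (th / 2)) with th in E by field. rewrite hc in E. nra. }
    destruct (sin_eq_0_0 _ H2) as [k hk]. exists k.
    unfold th in hk. apply (Rmult_eq_reg_r (ln q)); [|lra].
    field_simplify; [|lra]. lra.
Qed.

Lemma exp_le (x y : R) : x <= y -> exp x <= exp y.
Proof. intros [H|H]. left; apply exp_increasing; auto. subst; lra. Qed.

Lemma sqrt_le_sq (x y : R) : 0 <= y -> x <= y * y -> sqrt x <= y.
Proof. intros. rewrite <- (sqrt_square y) by auto. apply sqrt_le_1_alt; auto. Qed.

Lemma pow_fact_le_exp (c : R) (n : nat) : 0 <= c -> c ^ n / INR (fact n) <= exp c.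
Proof.
  intros hc.
  set (f := fun i => / INR (fact i) * c ^ i).
  assert (hf : forall i, 0 <= f i).
  { intros i; unfold f. apply Rmult_le_pos. left; apply Rinv_0_lt_compat, INR_fact_lt_0.
    apply pow_le; auto. }
  assert (Hcv : Un_cv (sum_f_R0 f) (exp c)).
  { unfold exp. destruct (exist_exp c) as [l Hl]. simpl. exact Hl. }
  assert (Hg : Un_growing (sum_f_R0 f)).
  { intros m. rewrite tech5. specialize (hf (S m)). lra. }
  assert (H1 := growing_ineq _ _ Hg Hcv n).
  assert (H2 : f n <= sum_f_R0 f n).
  { destruct n. right; reflexivity. rewrite tech5. assert (0 <= sum_f_R0 f n) by (apply cond_pos_sum; auto). lra. }
  assert (H3 : f n <= exp c) by lra. unfold f in H3. unfold Rdiv. rewrite Rmult_comm. lra.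
Qed.

Lemma finmin (f : nat -> R) : (forall n, 0 < f n) -> forall K0 : nat,
  exists m, 0 < m /\ forall n, (n < K0)%nat -> m <= f n.
Proof.
  intros hf K0. induction K0.
  - exists 1. split. lra. intros; lia.
  - destruct IHK0 as [m [hm Hm]]. exists (Rmin m (f K0)). split.
    apply Rmin_glb_lt; auto.
    intros n hn. destruct (Nat.eq_dec n K0). subst. apply Rmin_r.
    eapply Rle_trans. apply Rmin_l. apply Hm. lia.
Qed.

Lemma nat_above (y : R) : exists n : nat, y <= INR n.
Proof.
  destruct (archimed y) as [h1 h2].
  destruct (Z.le_gt_cases 0 (up y)) as [H|H].
  - exists (Z.to_nat (up y)). rewrite INR_IZR_INZ, Znat.Z2Nat.id; [lra|lia].
  - exists 0%nat. simpl. apply IZR_lt in H. lra.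
Qed.

Fixpoint Gp (c0 : R) (r : nat) : R :=
  match r with O => 1 | S r' => Gp c0 r' * (1 + c0 / INR (S r')) end.
Fixpoint Hp (A : R) (r : nat) : R :=
  match r with O => 1 | S r' => Hp A r' * sqrt (1 + (A / INR (S r')) * (A / INR (S r'))) end.

Lemma Gp_S c0 r : Gp c0 (S r) = Gp c0 r * (1 + c0 / INR (S r)).
Proof. reflexivity. Qed.
Lemma Hp_S A r : Hp A (S r) = Hp A r * sqrt (1 + (A / INR (S r)) * (A / INR (S r))).
Proof. reflexivity. Qed.

Lemma Gp_pos c0 r : 0 <= c0 -> 0 < Gp c0 r.
Proof.
  intros h; induction r. simpl; lra. rewrite Gp_S. apply Rmult_lt_0_compat; auto.
  assert (0 <= c0 / INR (S r)). { apply Rdiv_le_0_compat; auto. apply lt_0_INR; lia. } lra.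
Qed.

Lemma Hp_pos A r : 0 < Hp A r.
Proof.
  induction r. simpl; lra. rewrite Hp_S. apply Rmult_lt_0_compat; auto.
  apply sqrt_lt_R0. nra.
Qed.

Lemma Hp_small (A : R) (J : nat) : 0 <= A -> A <= INR J ->
  forall r, (r <= J)%nat -> Hp A r <= (2 * INR J) ^ r / INR (fact r).
Proof.
  intros hA hAJ r. induction r; intros hr.
  - simpl. lra.
  - rewrite Hp_S. simpl pow. rewrite fact_simpl, mult_INR.
    assert (hn : 0 < INR (S r)) by (apply lt_0_INR; lia).
    assert (hnJ : INR (S r) <= INR J) by (apply le_INR; lia).
    assert (hf := INR_fact_lt_0 r).
    assert (IH := IHr ltac:(lia)).
    assert (hs : sqrt (1 + A / INR (S r) * (A / INR (S r))) <= 2 * INR J / INR (S r)).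
    { apply sqrt_le_sq. apply Rdiv_le_0_compat; lra.
      assert (h1 : A / INR (S r) <= INR J / INR (S r)).
      { apply Rmult_le_compat_r; [left; apply Rinv_0_lt_compat; lra| lra]. }
      assert (h2 : 1 <= INR J / INR (S r)).
      { apply (Rmult_le_reg_r (INR (S r))); auto. unfold Rdiv; rewrite Rmult_assoc, Rinv_l; lra. }
      assert (h3 : 0 <= A / INR (S r)) by (apply Rdiv_le_0_compat; lra).
      replace (2 * INR J / INR (S r)) with (2 * (INR J / INR (S r))) by (unfold Rdiv; ring).
      nra. }
    assert (hs0 : 0 <= sqrt (1 + A / INR (S r) * (A / INR (S r)))) by apply sqrt_pos.
    assert (hH := Hp_pos A r).
    eapply Rle_trans. apply Rmult_le_compat; [lra|lra|apply IH|apply hs].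
    right. field. lra.
Qed.

Lemma Hp_large (A : R) (J : nat) : 0 <= A -> (1 <= J)%nat ->
  forall k, Hp A (J + k) <= Hp A J * exp (A * A / 2 * (/ INR J - / INR (J + k))).
Proof.
  intros hA hJ k. induction k.
  - rewrite Nat.add_0_r, Rminus_diag, Rmult_0_r, exp_0. lra.
  - rewrite Nat.add_succ_r. rewrite Hp_S.
    set (n := INR (S (J + k))).
    assert (hm : 0 < INR (J + k)) by (apply lt_0_INR; lia).
    assert (hnm : n = INR (J + k) + 1) by (unfold n; rewrite S_INR; auto).
    assert (hs : sqrt (1 + A / n * (A / n)) <= exp (A * A / 2 * (/ INR (J + k) - / n))).
    { eapply Rle_trans.
      apply (sqrt_le_sq _ (1 + (A / n * (A / n)) / 2)).
      assert (0 <= A / n * (A / n)) by nra. lra.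
      assert (0 <= A / n * (A / n)) by nra. nra.
      eapply Rle_trans; [|apply exp_le]. apply exp_ineq1_le.
      rewrite hnm. unfold Rdiv.
      assert (h1 : / (INR (J + k) + 1) * / (INR (J + k) + 1) <= / INR (J + k) - / (INR (J + k) + 1)).
      { replace (/ INR (J + k) - / (INR (J + k) + 1)) with (/ (INR (J + k) * (INR (J + k) + 1))) by (field; lra).
        rewrite <- Rinv_mult. apply Rinv_le_contravar. nra. nra. }
      replace (A * / (INR (J + k) + 1) * (A * / (INR (J + k) + 1)) * / 2)
        with (A * A / 2 * (/ (INR (J + k) + 1) * / (INR (J + k) + 1))) by (unfold Rdiv; ring).
      apply Rmult_le_compat_l. nra. exact h1. }
    assert (hH := Hp_pos A (J + k)).
    eapply Rle_trans. apply Rmult_le_compat; [lra|apply sqrt_pos|apply IHk|apply hs].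
    rewrite Rmult_assoc, <- exp_plus. right. f_equal. f_equal. fold n. ring.
Qed.

Lemma Hp_bound (A : R) (J : nat) : 0 <= A -> A <= INR J -> (1 <= J)%nat ->
  forall r, Hp A r <= exp (2 * INR J) * exp (A / 2).
Proof.
  intros hA hAJ hJ r.
  assert (hJ0 : 1 <= INR J) by (apply (le_INR 1); auto).
  assert (he1 : 1 <= exp (A / 2)) by (rewrite <- exp_0; apply exp_le; lra).
  assert (he2 := exp_pos (2 * INR J)).
  assert (small : forall r, (r <= J)%nat -> Hp A r <= exp (2 * INR J)).
  { intros r0 h. eapply Rle_trans. apply (Hp_small A J hA hAJ r0 h).
    apply pow_fact_le_exp. lra. }
  destruct (Compare_dec.le_lt_dec r J) as [h|h].
  - eapply Rle_trans. apply small; auto. nra.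
  - replace r with (J + (r - J))%nat by lia.
    eapply Rle_trans. apply Hp_large; auto.
    apply Rmult_le_compat. left; apply Hp_pos. left; apply exp_pos. apply small; lia.
    apply exp_le.
    assert (h1 : 0 < INR (J + (r - J))) by (apply lt_0_INR; lia).
    assert (h2 : 0 <= / INR (J + (r - J))) by (left; apply Rinv_0_lt_compat; lra).
    assert (h3 : A * A / 2 * / INR J <= A / 2).
    { apply (Rmult_le_reg_r (INR J)). lra. field_simplify; [|lra]. nra. }
    assert (0 <= A * A / 2) by nra.
    nra.
Qed.

Lemma RtoC_neq0 (x : R) : x <> 0 -> RtoC x <> 0%C.
Proof. intros h H. apply (f_equal fst) in H. simpl in H. auto. Qed.

Lemma gbinom_mod s r : Cmod (gbinom s r) = Cmod (rising s r) / INR (fact r).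
Proof.
  unfold gbinom. rewrite Cmod_div, Cmod_R, Rabs_pos_eq. auto.
  apply pos_INR. apply RtoC_neq0. apply INR_fact_neq_0.
Qed.

Lemma factor_bound (sigma v : R) (r : nat) :
  Cmod ((sigma, v) + RtoC (INR r))%C <=
  INR (S r) * ((1 + Rabs sigma / INR (S r)) *
     sqrt (1 + (Rabs v / INR (S r)) * (Rabs v / INR (S r)))).
Proof.
  set (n := INR (S r)). set (c0 := Rabs sigma). set (A := Rabs v).
  assert (hn : n = INR r + 1) by (unfold n; apply S_INR).
  assert (hr := pos_INR r).
  assert (hn0 : 0 < n) by lra.
  set (w := A / n).
  assert (hA : 0 <= A) by apply Rabs_pos.
  assert (hc : 0 <= c0) by apply Rabs_pos.
  assert (hw : 0 <= w) by (apply Rdiv_le_0_compat; lra).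
  assert (hAw : A = n * w) by (unfold w; field; lra).
  set (u := sqrt (1 + w * w)).
  assert (hu : u * u = 1 + w * w) by (apply sqrt_sqrt; nra).
  assert (hu0 : 0 <= u) by apply sqrt_pos.
  replace (n * ((1 + c0 / n) * u)) with ((n + c0) * u) by (field; lra).
  unfold Cmod. simpl fst; simpl snd.
  apply sqrt_le_sq. nra.
  assert (hv : v * v = A * A) by (unfold A; rewrite <- Rabs_mult, Rabs_right; [ring| nra]).
  assert (hs : (sigma + INR r) * (sigma + INR r) <= (c0 + INR r) * (c0 + INR r)).
  { assert (h1 : Rabs (sigma + INR r) <= c0 + INR r).
    { eapply Rle_trans. apply Rabs_triang. rewrite (Rabs_right (INR r)) by lra. unfold c0; lra. }
    assert (h2 : (sigma + INR r) * (sigma + INR r) = Rabs (sigma + INR r) * Rabs (sigma + INR r)).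
    { rewrite <- Rabs_mult; symmetry; apply Rabs_right; apply Rle_ge; apply Rle_0_sqr. }
    rewrite h2. assert (0 <= Rabs (sigma + INR r)) by apply Rabs_pos. nra. }
  replace ((n + c0) * u * ((n + c0) * u)) with ((n + c0) * (n + c0) * (u * u)) by ring.
  rewrite hu. simpl pow. rewrite !Rmult_1_r, Rplus_0_r, hv, hAw.
  assert ((c0 + INR r)*(c0+INR r) <= (n+c0)*(n+c0)) by nra.
  assert (n*n*(w*w) <= (n+c0)*(n+c0)*(w*w)) by (apply Rmult_le_compat_r; nra).
  nra.
Qed.

Lemma gbinom_bound sigma v r :
  Cmod (gbinom (sigma, v) r) <= Gp (Rabs sigma) r * Hp (Rabs v) r.
Proof.
  induction r.
  - rewrite gbinom_mod. simpl. rewrite Cmod_1. lra.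
  - rewrite gbinom_mod in *. rewrite Gp_S, Hp_S.
    change (rising (sigma, v) (S r)) with (rising (sigma, v) r * ((sigma, v) + RtoC (INR r)))%C.
    rewrite Cmod_mult, fact_simpl, mult_INR.
    assert (hF := factor_bound sigma v r).
    assert (hf := INR_fact_lt_0 r).
    assert (hn : 0 < INR (S r)) by (apply lt_0_INR; lia).
    replace (Cmod (rising (sigma, v) r) * Cmod ((sigma, v) + RtoC (INR r)) / (INR (S r) * INR (fact r)))
      with ((Cmod (rising (sigma, v) r) / INR (fact r)) * (Cmod ((sigma, v) + RtoC (INR r)) / INR (S r)))
      by (field; lra).
    replace (Gp (Rabs sigma) r * (1 + Rabs sigma / INR (S r)) *
      (Hp (Rabs v) r * sqrt (1 + Rabs v / INR (S r) * (Rabs v / INR (S r)))))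
      with ((Gp (Rabs sigma) r * Hp (Rabs v) r) * ((1 + Rabs sigma / INR (S r)) *
       sqrt (1 + Rabs v / INR (S r) * (Rabs v / INR (S r))))) by ring.
    apply Rmult_le_compat.
    + apply Rdiv_le_0_compat. apply Cmod_ge_0. auto.
    + apply Rdiv_le_0_compat. apply Cmod_ge_0. auto.
    + auto.
    + set (X := (1 + Rabs sigma / INR (S r)) * sqrt (1 + Rabs v / INR (S r) * (Rabs v / INR (S r)))) in *.
      replace X with (INR (S r) * X / INR (S r)) by (field; lra).
      unfold Rdiv. apply Rmult_le_compat_r. left; apply Rinv_0_lt_compat; auto. exact hF.
Qed.

Lemma G_series (c0 q : R) : 0 <= c0 -> 0 < q -> q < 1 ->
  ex_series (fun r => Gp c0 (S r) * q ^ r).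
Proof.
  intros hc hq0 hq1.
  set (a := fun r => Gp c0 (S r) * q ^ r).
  assert (ha : forall n, 0 < a n).
  { intros n; unfold a. apply Rmult_lt_0_compat. apply Gp_pos; auto. apply pow_lt; auto. }
  apply (ex_series_ext (fun n => Rabs (a n))).
  { intros n. apply Rabs_right. specialize (ha n). lra. }
  apply (ex_series_DAlembert a q); auto.
  { intros n. specialize (ha n). lra. }
  assert (Hinf : is_lim_seq (fun n => INR (S (S n))) p_infty).
  { apply (is_lim_seq_ext (fun n => INR (n + 2))).
    intros n. f_equal. lia.
    apply (is_lim_seq_incr_n INR 2). apply is_lim_seq_INR. }
  assert (Hinv := is_lim_seq_inv _ _ Hinf ltac:(discriminate)).
  change (Rbar_inv p_infty) with (Finite 0) in Hinv.
  assert (Hl := is_lim_seq_mult' _ _ _ _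
     (is_lim_seq_plus' _ _ _ _ (is_lim_seq_const 1) (is_lim_seq_mult' _ _ _ _ (is_lim_seq_const c0) Hinv))
     (is_lim_seq_const q)).
  replace ((1 + c0 * 0) * q) with q in Hl by ring.
  refine (is_lim_seq_ext _ _ _ _ Hl).
  intros n. cbv beta.
  unfold a. rewrite (Gp_S c0 (S n)). simpl pow.
  assert (hG := Gp_pos c0 (S n) hc). assert (hp := pow_lt q n hq0).
  assert (hN : 0 < INR (S (S n))) by (apply lt_0_INR; lia).
  assert (h0 : 0 <= c0 / INR (S (S n))) by (apply Rdiv_le_0_compat; lra).
  rewrite Rabs_right.
  field. split; lra.
  apply Rle_ge.
  replace (Gp c0 (S n) * (1 + c0 / INR (S (S n))) * (q * q ^ n) / (Gp c0 (S n) * q ^ n))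
    with ((1 + c0 / INR (S (S n))) * q) by (field; split; lra).
  nra.
Qed.

Lemma denom_pos (q : R) (t : C) : 0 < q -> q < 1 ->
  ~ (exists a b : Z, (a <= 0)%Z /\ t = (IZR a, 2 * PI * IZR b / ln q)) ->
  forall r : nat, 0 < Cmod (1 - qpow q (t + RtoC (INR r)))%C.
Proof.
  intros hq0 hq1 Ht r. apply Cmod_gt_0. intro H.
  assert (H1 : qpow q (t + RtoC (INR r)) = 1%C).
  { replace (qpow q (t + RtoC (INR r))) with (1 - (1 - qpow q (t + RtoC (INR r))))%C by ring.
    rewrite H. ring. }
  destruct (qpow_eq1 q _ hq0 hq1 H1) as [h1 [k hk]].
  apply Ht. exists (- Z.of_nat r)%Z, k. split. lia.
  destruct t as [t1 t2]. simpl in h1, hk. f_equal.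
  rewrite opp_IZR, <- INR_IZR_INZ. lra. lra.
Qed.

Lemma inf_dist_prop (q : R) (t : C) : 0 < q -> q < 1 ->
  ~ (exists a b : Z, (a <= 0)%Z /\ t = (IZR a, 2 * PI * IZR b / ln q)) ->
  0 < inf_dist q t /\ forall r : nat, (1 <= r)%nat ->
     inf_dist q t <= Cmod (1 - qpow q (t + RtoC (INR r)))%C.
Proof.
  intros hq0 hq1 Ht.
  assert (hl : ln q < 0) by (rewrite <- ln_1; apply ln_increasing; lra).
  set (f := fun r : nat => Cmod (1 - qpow q (t + RtoC (INR r)))%C).
  assert (hf := denom_pos q t hq0 hq1 Ht).
  destruct (nat_above (ln (1/2) / ln q - fst t)) as [K0 hK0].
  assert (large : forall r, (K0 <= r)%nat -> 1/2 <= f r).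
  { intros r hr. unfold f.
    assert (hz : Cmod (qpow q (t + RtoC (INR r))) <= 1/2).
    { rewrite qpow_mod. replace (1/2) with (exp (ln (1/2))) by (apply exp_ln; lra).
      apply exp_le. destruct t as [t1 t2]. simpl fst.
      assert (INR K0 <= INR r) by (apply le_INR; auto).
      assert (ln (1/2) / ln q <= t1 + INR r) by (simpl in hK0; lra).
      assert (ln (1/2) = (ln (1/2) / ln q) * ln q) by (field; lra).
      nra. }
    set (z := qpow q (t + RtoC (INR r))) in *.
    assert (ht := Cmod_triangle (1 - z) z).
    assert (E1 : Cplus (Cminus 1 z) z = RtoC 1) by ring.
    rewrite E1 in ht.
    rewrite Cmod_1 in ht. lra. }
  destruct (finmin f hf K0) as [m0 [hm0 Hm0]].
  set (m := Rmin (1/2) m0).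
  assert (hm : 0 < m) by (apply Rmin_glb_lt; lra).
  assert (Hm : forall r, m <= f r).
  { intros r. destruct (Compare_dec.le_lt_dec K0 r) as [h|h].
    - eapply Rle_trans. apply Rmin_l. apply large; auto.
    - eapply Rle_trans. apply Rmin_r. apply Hm0; auto. }
  unfold inf_dist.
  set (E := fun x => exists r : nat, (1 <= r)%nat /\ x = Cmod (1 - qpow q (t + RtoC (INR r)))%C).
  destruct (Glb_Rbar_correct E) as [Hlb Hgl].
  remember (Glb_Rbar E) as g eqn:Hg. clear Hg.
  assert (HE : forall r, (1 <= r)%nat -> E (f r)).
  { intros r hr. exists r. split; auto. }
  assert (Hmlb : Rbar_le m g).
  { apply Hgl. intros x [r [hr ->]]. simpl. apply Hm. }
  destruct g as [g| |].
  - simpl. simpl in Hmlb. split. lra.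
    intros r hr. specialize (Hlb _ (HE r hr)). simpl in Hlb. exact Hlb.
  - specialize (Hlb _ (HE 1%nat (le_n 1))). simpl in Hlb. contradiction.
  - simpl in Hmlb. contradiction.
Qed.

Lemma nat_near (A : R) : 0 <= A -> exists J : nat, A <= INR J <= A + 1.
Proof.
  intros hA. destruct (archimed A) as [h1 h2].
  assert (hz : (0 < up A)%Z) by (apply lt_IZR; lra).
  exists (Z.to_nat (up A)). rewrite INR_IZR_INZ, Znat.Z2Nat.id by lia. lra.
Qed.

Theorem lemma2p3 (q : R) (hq0 : 0 < q) (hq1 : q < 1) (sigma : R) :
  exists Cst : R, 0 < Cst /\
  forall (N : nat), (1 <= N)%nat ->
  forall t : C,
    ~ (exists a b : Z, (a <= 0)%Z /\ t = (IZR a, 2 * PI * IZR b / ln q)) ->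
    exists V : R, forall v : R, V <= Rabs v ->
      let s : C := (sigma, v) in
      exists L : C, is_series (fun r => zeta_term q s t N r) L /\
      Cmod L <=
        Cst * ( Rpower q (INR N * fst t) / Cmod (1 - qpow q t)%C
              + Rpower q (INR N * fst t) * exp (Cmod s) / inf_dist q t
                * exp (PI / 2 * Rabs v)
                * ( q ^ N / (1 - q ^ N)
                  + / sqrt (Rabs v) * Rpower q (INR N * Rabs v)
                    * (1 + 1 / (- INR N * ln q)))).
Proof.
  set (c0 := Rabs sigma).
  assert (hc0 : 0 <= c0) by apply Rabs_pos.
  assert (HMs := G_series c0 q hc0 hq0 hq1).
  set (M := Series (fun r => Gp c0 (S r) * q ^ r)).
  assert (hM : 0 <= M).
  { assert (H := Series_le (fun r => 0 * (Gp c0 (S r) * q ^ r)) (fun r => Gp c0 (S r) * q ^ r)).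
    rewrite Series_scal_l, Rmult_0_l in H. apply H; auto.
    intros n. assert (0 < Gp c0 (S n)) by (apply Gp_pos; auto).
    assert (0 < q ^ n) by (apply pow_lt; auto). nra. }
  assert (hl : ln q < 0) by (rewrite <- ln_1; apply ln_increasing; lra).
  assert (hdl : 0 < PI / 2 - 3 / 2) by (assert (H := PI2_3_2); lra).
  set (dl := PI / 2 - 3 / 2) in *.
  exists 1. split. lra.
  intros N hN t Ht.
  destruct (inf_dist_prop q t hq0 hq1 Ht) as [hd0 Hd].
  assert (hden := denom_pos q t hq0 hq1 Ht).
  set (d := inf_dist q t) in *.
  assert (he2 := exp_pos 2).
  exists (1 + exp 2 * M / dl).
  intros v hv s.
  set (A := Rabs v) in *.
  assert (hMd : 0 <= exp 2 * M / dl) by (apply Rdiv_le_0_compat; nra).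
  assert (hA1 : 1 <= A) by lra.
  destruct (nat_near A ltac:(lra)) as [J [hJ1 hJ2]].
  assert (hJ : (1 <= J)%nat) by (apply INR_le; simpl; lra).
  assert (hN1 : 1 <= INR N) by (apply (le_INR 1); auto).
  set (x := q ^ N).
  assert (hx0 : 0 < x) by (apply pow_lt; auto).
  assert (hxq : x <= q).
  { unfold x. destruct N. lia. simpl. assert (q ^ N <= 1) by (rewrite <- (pow1 N); apply pow_incr; lra).
    nra. }
  set (Rq := Rpower q (INR N * fst t)).
  assert (hRq : 0 < Rq) by apply exp_pos.
  set (E := exp (2 * INR J) * exp (A / 2)).
  assert (HE : forall r, Hp A r <= E) by (intros r; apply Hp_bound; lra || auto).
  set (K := Rq * E * x / d).
  assert (Hterm : forall r, Cmod (zeta_term q s t N r) =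
     Cmod (gbinom s r) * (Rq * x ^ r) / Cmod (1 - qpow q (t + RtoC (INR r)))%C).
  { intros r. unfold zeta_term. rewrite Cmod_div, Cmod_mult, qpow_mod.
    2: { apply Cmod_gt_0. apply hden. }
    f_equal. f_equal.
    unfold x, Rq. rewrite <- pow_mult, <- Rpower_pow by auto. unfold Rpower.
    rewrite <- exp_plus. f_equal. rewrite mult_INR. destruct t as [t1 t2]. simpl. ring. }
  set (b := fun r => match r with O => Cmod (zeta_term q s t N 0) | S r' => K * (Gp c0 (S r') * q ^ r') end).
  assert (Hb : forall r, Cmod (zeta_term q s t N r) <= b r).
  { intros [|r]. simpl. lra.
    change (b (S r)) with (K * (Gp c0 (S r) * q ^ r)). rewrite Hterm.
    assert (h1 : Cmod (gbinom s (S r)) <= Gp c0 (S r) * E).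
    { eapply Rle_trans. apply gbinom_bound. apply Rmult_le_compat_l.
      left; apply Gp_pos; auto. apply HE. }
    assert (h2 : x ^ S r <= x * q ^ r).
    { simpl. apply Rmult_le_compat_l. lra. apply pow_incr. lra. }
    assert (h3 : / Cmod (1 - qpow q (t + RtoC (INR (S r))))%C <= / d).
    { apply Rinv_le_contravar; auto. apply Hd. lia. }
    assert (h0 := Cmod_ge_0 (gbinom s (S r))).
    assert (h4 : 0 <= x ^ S r) by (apply pow_le; lra).
    assert (h5 : 0 <= / Cmod (1 - qpow q (t + RtoC (INR (S r))))%C).
    { left; apply Rinv_0_lt_compat; auto. }
    unfold Rdiv. eapply Rle_trans.
    apply Rmult_le_compat; [apply Rmult_le_pos; [exact h0|nra]|exact h5| |exact h3].
    apply Rmult_le_compat; [exact h0|nra|exact h1|].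
    apply Rmult_le_compat_l; [lra|exact h2].
    right. unfold K. unfold Rdiv. ring. }
  assert (Hbs : ex_series b).
  { apply ex_series_incr_1. change (fun k => b (S k)) with (fun k => K * (Gp c0 (S k) * q ^ k)).
    apply (ex_series_ext (fun n => scal K (Gp c0 (S n) * q ^ n))).
    intros n; reflexivity.
    apply (@ex_series_scal_l R_AbsRing R_NormedModule). exact HMs. }
  destruct (ex_series_le (fun r => zeta_term q s t N r) b Hb Hbs) as [L HL].
  exists L. split. exact HL.
  eapply Rle_trans. apply (series_norm_le _ b L HL Hbs Hb).
  rewrite Series_incr_1 by auto. change (fun k => b (S k)) with (fun k => K * (Gp c0 (S k) * q ^ k)).
  change (b 0%nat) with (Cmod (zeta_term q s t N 0)).
  rewrite Series_scal_l. fold M.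
  assert (Ht0 : (t + RtoC (INR 0))%C = t).
  { destruct t; apply injective_projections; simpl; ring. }
  rewrite Hterm, Ht0.
  assert (Hg0 : Cmod (gbinom s 0) = 1).
  { rewrite gbinom_mod. simpl. rewrite Cmod_1. field. }
  rewrite Hg0. simpl pow. fold Rq.
  assert (hs : A <= Cmod s).
  { eapply Rle_trans; [|apply Rmax_Cmod]. apply Rmax_r. }
  set (Z := exp (Cmod s) * exp (PI / 2 * A)).
  assert (HEM : E * M <= Z).
  { assert (hE : E <= exp 2 * exp (5/2 * A)).
    { unfold E. rewrite <- !exp_plus. apply exp_le. lra. }
    assert (hdA : exp 2 * M <= exp (dl * A)).
    { eapply Rle_trans; [|apply exp_ineq1_le].
      assert (dl * (1 + exp 2 * M / dl) <= dl * A) by (apply Rmult_le_compat_l; lra).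
      replace (dl * (1 + exp 2 * M / dl)) with (dl + exp 2 * M) in H by (field; lra).
      lra. }
    assert (hZ : exp (5/2 * A) * exp (dl * A) <= Z).
    { unfold Z. rewrite <- !exp_plus. apply exp_le. unfold dl. nra. }
    assert (0 < exp (5/2 * A)) by apply exp_pos.
    nra. }
  set (P := / sqrt A * Rpower q (INR N * A) * (1 + 1 / (- INR N * ln q))).
  assert (hP : 0 <= P).
  { unfold P. apply Rmult_le_pos. apply Rmult_le_pos.
    left; apply Rinv_0_lt_compat, sqrt_lt_R0; lra.
    left; apply exp_pos.
    assert (0 < 1 / (- INR N * ln q)) by (apply Rdiv_lt_0_compat; nra). lra. }
  assert (hxx : x <= x / (1 - x) + P).
  { assert (x <= x / (1 - x)).
    { apply (Rmult_le_reg_r (1 - x)). lra. field_simplify; nra. }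
    lra. }
  assert (hZ0 : 0 <= E * M).
  { unfold E. assert (0 < exp (2 * INR J) * exp (A / 2)) by (apply Rmult_lt_0_compat; apply exp_pos). nra. }
  assert (hRd : 0 < Rq / d) by (apply Rdiv_lt_0_compat; auto).
  replace (K * M) with (Rq / d * (E * M) * x) by (unfold K; field; lra).
  fold Z. fold P.
  replace (Rq * exp (Cmod s) / d * exp (PI / 2 * A) * (x / (1 - x) + P))
    with (Rq / d * Z * (x / (1 - x) + P)) by (unfold Z; field; lra).
  assert (Rq / d * (E * M) * x <= Rq / d * Z * (x / (1 - x) + P)).
  { apply Rmult_le_compat. nra. lra. apply Rmult_le_compat_l; lra. auto. }
  rewrite Rmult_1_l. unfold Rdiv at 1. rewrite Rmult_1_l. 
  unfold Rdiv. lra.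
Qed.
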